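(* Let $\mathcal{N}$ be a closed chemical reaction network, $\{\omega^1,\dots,\omega^d\}$ a reduced basis of $\Gamma^\perp$, and $\widetilde f_\kappa$ the associated extended rate function. For a rate vector $\kappa\in\mathbb{R}_+^{\mathcal{R}}$, let $\kappa^o$, $g_{\kappa^o}$, $\delta_i$ and $E^n_{d+1}$ be as defined in the context. Then, for every $c\in\mathbb{R}^n$, $$\det(J_c(g_{\kappa^o}))=(-1)^d\det\big(J_c(\widetilde f_\kappa)-E^n_{d+1}\big).$$
   Context: A chemical reaction network $\mathcal{N}=(\mathcal{S},\mathcal{C},\mathcal{R})$ consists of a finite set of species $\mathcal{S}=\{S_1,\dots,S_n\}$, a finite set of complexes $\mathcal{C}\subset\mathbb{Z}_{\ge 0}^n$ (species $S_i$ identified with the $i$-th standard basis vector; the zero complex $0$ allowed), and a finite set of reactions $\mathcal{R}\subset\mathcal{C}\times\mathcal{C}$, written $y\to y'$, with $y\ne y'$. $\mathbb{R}_+$ denotes the positive reals. A rate vector is $\kappa=(k_{y\to y'})\in\mathbb{R}_+^{\mathcal{R}}$; the mass-action species formation rate function is $f_\kappa(c)=\sum_{y\to y'\in\mathcal{R}}k_{y\to y'}c^y(y'-y)$, $c^y=\prod_i c_i^{y_i}$, with components $f_{\kappa,i}$. The stoichiometric subspace is $\Gamma=\mathrm{span}\{y'-y:y\to y'\in\mathcal{R}\}$, $s=\dim\Gamma$, $d=n-s$; the network is closed if $\Gamma\ne\mathbb{R}^n$. A basis $\{\omega^1,\dots,\omega^d\}$ of $\Gamma^\perp$ with $\omega^i=(\lambda^i_1,\dots,\lambda^i_n)$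 is reduced if $\lambda^i_i=1$ and $\lambda^i_j=0$ for all $j\in\{1,\dots,d\}$, $j\ne i$ (species are assumed ordered so that such a basis exists). The extended rate function is $\widetilde f_\kappa(c)=(\omega^1\cdot c,\dots,\omega^d\cdot c,f_{\kappa,d+1}(c),\dots,f_{\kappa,n}(c))$; $J_c$ denotes the Jacobian at $c$. The associated fully open network $\mathcal{N}^o$ has reactions $\mathcal{R}^o=\mathcal{R}\cup\{S_i\to 0: i=1,\dots,n\}$. Let $\mathcal{O}(\mathcal{N})=\{i: S_i\to 0\notin\mathcal{R}\}$. Given $\kappa$, $\kappa^o\in\mathbb{R}_+^{\mathcal{R}^o}$ agrees with $\kappa$ on $\mathcal{R}$ and has $k_{S_i\to 0}=1$ for $i\in\mathcal{O}(\mathcal{N})$; $g_{\kappa^o}$ is the mass-action species formation rate function of $\mathcal{N}^o$ with rate vector $\kappa^o$, i.e. $g_{\kappa^o}(c)=f_\kappa(c)-(\delta_1c_1,\dots,\delta_nc_n)$ with $\delta_i=1$ if $i\in\mathcal{O}(\mathcal{N})$ and $\delta_i=0$ otherwise. $E^n_{d+1}$ is the $n\times n$ diagonal matrix with entry $\delta_i$ at position $(i,i)$ for $i=d+1,\dots,n$ and zeros elsewhere. *)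

(* Defs.v *)
From HB Require Import structures.
From mathcomp Require Import all_boot all_order all_algebra.
From mathcomp Require Import mpoly.
Set Implicit Arguments. Unset Strict Implicit. Unset Printing Implicit Defensive.
Import Order.TTheory GRing.Theory Num.Theory.
Local Open Scope ring_scope.

(* A reaction network with n species S_0..S_{n-1} and r reactions indexed by 'I_r.
   Reaction k is  src k -> tgt k,  complexes being monomials 'X_{1..n} (= Z_{>=0}^n). *)
Section CRN.
Variables (R : realFieldType) (n r : nat).
Variables (src tgt : 'I_r -> 'X_{1..n}).

Definition wf_network : Prop :=
  injective (fun k => (src k, tgt k)) /\ (forall k, src k != tgt k).

Definition rvec (k : 'I_r) : 'rV[R]_n :=
  \row_j ((tgt k j)%:R - (src k j)%:R).

(* stoichiometric matrix: its row space is Gamma *)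
Definition stoich : 'M[R]_(r, n) := \matrix_(k, j) rvec k 0 j.

Definition closed_network : Prop := (\rank stoich < n)%N.

Definition basis_Gamma_perp (d : nat) (W : 'M[R]_(d, n)) : Prop :=
  row_free W /\ (W == kermx stoich^T)%MS.

Definition reduced_basis (d : nat) (W : 'M[R]_(d, n)) : Prop :=
  forall (i : 'I_d) (j : 'I_n), (j < d)%N -> W i j = (i == j :> nat)%:R.

Definition fpoly (kappa : 'I_r -> R) (i : 'I_n) : {mpoly R[n]} :=
  \sum_(k < r) (kappa k * ((tgt k i)%:R - (src k i)%:R)) *: 'X_[src k].

Definition delta (i : 'I_n) : R :=
  if [exists k, (src k == U_(i)%MM) && (tgt k == 0%MM)] then 0 else 1.

Definition gpoly (kappa : 'I_r -> R) (i : 'I_n) : {mpoly R[n]} :=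
  fpoly kappa i - delta i *: 'X_i.

Definition ftilde (d : nat) (W : 'M[R]_(d, n)) (kappa : 'I_r -> R)
    (i : 'I_n) : {mpoly R[n]} :=
  oapp (fun i' : 'I_d => \sum_(j < n) W i' j *: 'X_j) (fpoly kappa i)
       (insub (nat_of_ord i)).

Definition Ematrix (d : nat) : 'M[R]_n :=
  \matrix_(i, j) (if (i == j) && (d <= i)%N then delta i else 0).

End CRN.

Definition jac (R : realFieldType) (n : nat) (F : 'I_n -> {mpoly R[n]})
    (c : 'I_n -> R) : 'M[R]_n :=
  \matrix_(i, j) (mderiv j (F i)).@[c].

(* Main.v *)
Require Import Defs.
From HB Require Import structures.
From mathcomp Require Import all_boot all_order all_algebra.
From mathcomp Require Import mpoly.
From mathcomp Require Import ring.
Import Order.TTheory GRing.Theory Num.Theory.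
Local Open Scope ring_scope.

Lemma evd_X (R : realFieldType) (n : nat) (j l : 'I_n) (c : 'I_n -> R) :
  (mderiv j ('X_l : {mpoly R[n]})).@[c] = (l == j)%:R.
Proof.
rewrite mderivX mevalZ mnm1E; case: eqP => [->|_].
  have -> : (U_(j) - U_(j) = 0)%MM by apply/mnmP=> k; rewrite mnmBE mnm0E subnn.
  by rewrite mpolyX0 meval1 mulr1.
by rewrite mul0r.
Qed.

Lemma jac_f_fact (R : realFieldType) (n r : nat)
    (src tgt : 'I_r -> 'X_{1..n}) (kappa : 'I_r -> R) (c : 'I_n -> R) :
  jac (fpoly src tgt kappa) c = (stoich R src tgt)^T *m
     \matrix_(k, j) (kappa k * (mderiv j ('X_[src k] : {mpoly R[n]})).@[c]).
Proof.
apply/matrixP => i j; rewrite !mxE /fpoly.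
rewrite (big_morph _ (@mderivD _ _ j) (@mderiv0 _ _ j)) (big_morph _ (@mevalD _ _ c) (@meval0 _ _ c)).
apply: eq_bigr => k _; rewrite !mxE mderivZ mevalZ; ring.
Qed.

Theorem theorem7p1 (R : realFieldType) (n r : nat)
    (src tgt : 'I_r -> 'X_{1..n}) (d : nat) (W : 'M[R]_(d, n))
    (kappa : 'I_r -> R) (c : 'I_n -> R) :
  wf_network src tgt ->
  closed_network R src tgt ->
  basis_Gamma_perp src tgt W ->
  reduced_basis W ->
  (forall k, 0 < kappa k) ->
  \det (jac (gpoly src tgt kappa) c)
    = (-1) ^+ d * \det (jac (ftilde src tgt W kappa) c - Ematrix R src tgt d).
Proof.
move=> _ _ [rfW subW] red _.
set J := jac (fpoly src tgt kappa) c.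
have WS : W *m (stoich R src tgt)^T = 0 by apply/sub_kermxP; case/andP: subW.
have WJ : W *m J = 0 by rewrite /J jac_f_fact mulmxA WS mul0mx.
have dn : (d <= n)%N by move/eqP: rfW => <-; exact: rank_leq_col.
have Wdelta : forall a j, W a j * delta R src tgt j = W a j.
  move=> a j; rewrite /delta; case: ifP => [/existsP [k /andP [/eqP hs /eqP ht]] | _];
    last by rewrite mulr1.
  have := congr1 (fun M : 'M[R]_(d, r) => M a k) WS; rewrite !mxE => h.
  rewrite mulr0; apply/esym; move: h.
  under eq_bigr => l _ do rewrite !mxE hs ht mnm0E mnm1E sub0r mulrN.
  rewrite sumrN (bigD1 j) //= eqxx mulr1 big1 ?addr0; first by move/eqP; rewrite oppr_eq0 => /eqP.
  by move=> l /negbTE hl; rewrite eq_sym hl mulr0.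
set Dm := \matrix_(i, j) (delta R src tgt i * (i == j)%:R) : 'M[R]_n.
have jacg : jac (gpoly src tgt kappa) c = J - Dm.
  apply/matrixP=> i j; rewrite !mxE /gpoly mderivB mderivZ mevalB mevalZ evd_X.
  by [].

have jacft : jac (ftilde src tgt W kappa) c =
    \matrix_(i, j) oapp (fun i' : 'I_d => W i' j) (J i j) (insub (i : nat)).
  apply/matrixP=> i j; rewrite !mxE /ftilde; case: insubP => [i' _ _ | _] /=;
    last by rewrite /J ?mxE.
  rewrite (big_morph _ (@mderivD _ _ j) (@mderiv0 _ _ j)) (big_morph _ (@mevalD _ _ c) (@meval0 _ _ c)).
  under eq_bigr => l _ do rewrite mderivZ mevalZ evd_X.
  rewrite (bigD1 j) //= eqxx mulr1 big1 ?addr0 // => l /negbTE ->; by rewrite mulr0.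
set P := \matrix_(i, j) oapp (fun i' : 'I_d => - W i' j) ((i == j)%:R) (insub (i : nat)) : 'M[R]_n.
have key : P *m (J - Dm) = jac (ftilde src tgt W kappa) c - Ematrix R src tgt d.
  apply/matrixP=> i j; rewrite jacft !mxE.
  under eq_bigr => l _ do rewrite !mxE.
  case: insubP => [i' hi vi | hi] /=.
    have -> : (d <= i)%N = false by apply/negbTE; rewrite -ltnNge.
    rewrite andbF subr0.
    under eq_bigr => l _ do rewrite mulrBr.
    rewrite sumrB.
    have := congr1 (fun M : 'M[R]_(d, n) => M i' j) WJ; rewrite !mxE => h.
    under eq_bigr => l _ do rewrite mulNr.
    have h' : \sum_l W i' l * (mderiv j (fpoly src tgt kappa l)).@[c] = 0.
      by apply: etrans h; apply: eq_bigr => l _; rewrite /J /jac mxE.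
    rewrite sumrN h' oppr0 sub0r.
    rewrite (bigD1 j) //= eqxx mulr1 mulNr Wdelta big1 ?addr0 ?opprK // => l /negbTE ->.
    by rewrite !mulr0.
  rewrite -leqNgt in hi; rewrite hi andbT.
  rewrite (bigD1 i) //= eqxx mul1r big1 ?addr0; last first.
    by move=> l /negbTE hl; rewrite eq_sym hl mul0r.
  by case: (i =P j) => [->|_]; rewrite ?mulr1 ?mulr0.
have detP : \det P = (-1) ^+ d.
  rewrite -det_tr det_trig; last first.
    apply/is_trig_mxP => i j lt_ij; rewrite !mxE.
    case: insubP => [j' hj vj | _] /=.
      by rewrite red ?vj ?(gtn_eqF lt_ij) ?oppr0 //; exact: ltn_trans lt_ij hj.
    by case: eqP lt_ij => // ->; rewrite ltnn.
  transitivity (\prod_(i < n) (if (i < d)%N then -1 else 1) : R).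
    apply: eq_bigr => i _; rewrite !mxE; case: insubP => [i' hi vi | hi] /=.
      by rewrite hi red ?vi ?eqxx // -vi.
    by rewrite (negbTE hi) eqxx.
  rewrite -big_mkcond /= -(big_ord_widen _ (fun _ => -1 : R) dn).
  by rewrite prodr_const card_ord.
rewrite jacg -key det_mulmx detP mulrA -exprMn mulrNN mulr1 expr1n mul1r //.
Qed.
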